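(* Fix a point with a symmetric positive definite matrix $g_{\alpha\beta}$ ($\alpha,\beta\in\{1,2\}$), $g=\det(g_{\alpha\beta})$, inverse $g^{\alpha\beta}$. Let $P=P(\rho,e)$ be a smooth pressure law, $U=(\rho,v^1,v^2,V^3,e)^T$ with $\rho>0$, $E=e+\tfrac12\left(g_{\alpha\beta}v^\alpha v^\beta+(V^3)^2\right)$, and assume $PP_e+\rho^2P_\rho>0$, $c=\frac{\sqrt{PP_e+\rho^2P_\rho}}{\rho}$. Let $A_0$ be the Jacobian with respect to $U$ of $Q(U)=\big(\rho\sqrt g,\ \rho\sqrt g\,v^1,\ \rho\sqrt g\,v^2,\ \rho\sqrt g\,V^3,\ \rho\sqrt g\,E\big)^T$, and for $\alpha=1,2$ let $A^\alpha$ be the Jacobian with respect to $U$ of $$F^\alpha(U)=\Big(\rho\sqrt g\,v^\alpha,\ \sqrt g[\rho v^1v^\alpha+g^{1\alpha}P],\ \sqrt g[\rho v^2v^\alpha+g^{2\alpha}P],\ \rho\sqrt g\,V^3v^\alpha,\ \sqrt g[\rho E+P]v^\alpha\Big)^T$$ (with $g_{\alpha\beta}$ held fixed). Set $\bar A^\alpha=A_0^{-1}A^\alpha$. For every covector $(w_1,w_2)$ with $g^{\alpha\beta}w_\alpha w_\beta=1$, the eigenvalues of $\bar A_w=w_1\bar A^1+w_2\bar A^2$ are $$v^\alpha w_\alpha,\ v^\alpha w_\alpha,\ v^\alpha w_\alpha,\ v^\alpha w_\alpha+c,\ v^\alpha w_\alpha-c.$$ In particular the pseudo-time-dependent system $A_0U_t+A^1U_{\xi^1}+A^2U_{\xi^2}=0$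 is everywhere non-strictly hyperbolic.
   Context: A first-order system $U_t+\sum_\alpha\bar A^\alpha U_{\xi^\alpha}=0$ is non-strictly hyperbolic if for every unit (co)vector $w$ the eigenvalues of $\sum_\alpha w_\alpha\bar A^\alpha$ are all real but not all distinct. Einstein summation over repeated Greek indices in $\{1,2\}$ is used. The system arises from reinserting (nonphysical) pseudo-time derivatives of the conserved quantities into the steady conical Euler equations on the unit sphere. *)

(* Defs.v *)
From HB Require Import structures.
From mathcomp Require Import all_boot all_order all_algebra.
From mathcomp Require Import all_classical all_reals all_analysis.
Set Implicit Arguments. Unset Strict Implicit. Unset Printing Implicit Defensive.
Import Order.TTheory GRing.Theory Num.Theory.
Import numFieldNormedType.Exports.
Local Open Scope ring_scope.

Section Conical.
Variable R : realType.

(* a row vector given by a list of entries (missing entries are 0) *)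
Definition rowl n (s : seq R) : 'rV[R]_n := \row_(j < n) nth 0 s j.

Definition spd2 (g : 'M[R]_2) : Prop :=
  g^T = g /\ forall x : 'rV[R]_2, x != 0 -> 0 < (x *m g *m x^T) 0 0.

(* Usual (column-convention) Jacobian: entry (i,j) = dF_i/dU_j.
   MathComp's 'J uses the row-vector convention, hence the transpose. *)
Definition Jac n m (f : 'rV[R]_n -> 'rV[R]_m) (p : 'rV[R]_n) : 'M[R]_(m, n) :=
  (jacobian f p)^T.

(* U = (rho, v^1, v^2, V^3, e) stored as U 0 0, ..., U 0 4 *)
Definition rhoU (U : 'rV[R]_5) := U 0 0.
Definition v1U (U : 'rV[R]_5) := U 0 1.
Definition v2U (U : 'rV[R]_5) := U 0 2.
Definition V3U (U : 'rV[R]_5) := U 0 3.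
Definition eU (U : 'rV[R]_5) := U 0 4.
(* v^alpha for alpha in {0,1} (i.e. paper's alpha = 1,2) *)
Definition vU (U : 'rV[R]_5) (a : 'I_2) := if a == 0 then v1U U else v2U U.

Definition rho_e (U : 'rV[R]_5) : 'rV[R]_2 := rowl 2 [:: rhoU U; eU U].

Definition Etot (g : 'M[R]_2) (U : 'rV[R]_5) : R :=
  eU U + 2^-1 * (\sum_(a < 2) \sum_(b < 2) g a b * vU U a * vU U b + V3U U ^+ 2).

Definition Qmap (g : 'M[R]_2) (U : 'rV[R]_5) : 'rV[R]_5 :=
  let sg := Num.sqrt (\det g) in
  rowl 5 [:: rhoU U * sg; rhoU U * sg * v1U U; rhoU U * sg * v2U U;
             rhoU U * sg * V3U U; rhoU U * sg * Etot g U].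

Definition Fmap (P : 'rV[R]_2 -> R) (g : 'M[R]_2) (a : 'I_2) (U : 'rV[R]_5)
  : 'rV[R]_5 :=
  let sg := Num.sqrt (\det g) in
  let gi := invmx g in
  let p := P (rho_e U) in
  rowl 5 [:: rhoU U * sg * vU U a;
             sg * (rhoU U * v1U U * vU U a + gi 0 a * p);
             sg * (rhoU U * v2U U * vU U a + gi 1 a * p);
             rhoU U * sg * V3U U * vU U a;
             sg * (rhoU U * Etot g U + p) * vU U a].

Definition Abar P g (a : 'I_2) (U : 'rV[R]_5) : 'M[R]_5 :=
  invmx (Jac (Qmap g) U) *m Jac (Fmap P g a) U.

Definition Abar_w P g (w : 'rV[R]_2) U : 'M[R]_5 :=
  w 0 0 *: Abar P g 0 U + w 0 1 *: Abar P g 1 U.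

Definition ginv_norm2 (g : 'M[R]_2) (w : 'rV[R]_2) : R :=
  (w *m invmx g *m w^T) 0 0.

(* Non-strict hyperbolicity of the system at U: for every unit covector w,
   the eigenvalues (with multiplicity) of Abar_w are all real but not all
   distinct, i.e. its characteristic polynomial splits over R with a repeated
   root. *)
Definition nonstrictly_hyperbolic_at P g U : Prop :=
  forall w : 'rV[R]_2, ginv_norm2 g w = 1 ->
    exists s : seq R, size s = 5%N /\
      char_poly (Abar_w P g w U) = \prod_(l <- s) ('X - l%:P) /\ ~~ uniq s.

End Conical.

(* Main.v *)
Require Import Defs.
From HB Require Import structures.
From mathcomp Require Import all_boot all_order all_algebra.
From mathcomp Require Import all_classical all_reals all_analysis.
From mathcomp Require Import ring lra.
Import Order.TTheory GRing.Theory Num.Theory.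
Import numFieldNormedType.Exports.
Local Open Scope ring_scope.
Set Implicit Arguments. Unset Strict Implicit.

Section Main.
Variable R : realType.

Lemma char_poly_sim {n} {M L S : 'M[R]_n} : S \in unitmx -> M *m S = S *m L ->
  char_poly M = char_poly L.
Proof.
move=> uS HMS.
have H : char_poly_mx M *m map_mx polyC S = map_mx polyC S *m char_poly_mx L.
  rewrite /char_poly_mx mulmxBl mulmxBr -!map_mxM HMS.
  by rewrite mul_scalar_mx mul_mx_scalar.
have := congr1 determinant H; rewrite !det_mulmx det_map_mx mulrC.
have hS : (\det S)%:P != 0 by rewrite polyC_eq0 -unitfE -unitmxE.
exact: (mulfI hS).
Qed.


Definition mx5 (l : seq (seq R)) : 'M[R]_5 := \matrix_(i, j) nth 0 (nth [::] l i) j.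

Lemma ord5_ind' (Pr : 'I_5 -> Prop) : Pr 0 -> Pr 1 -> Pr 2 -> Pr 3 -> Pr 4 -> forall i, Pr i.
Proof.
move=> H0 H1 H2 H3 H4 [[|[|[|[|[|i]]]]] Hi].
- by rewrite (_ : Ordinal Hi = 0); last apply/val_inj.
- by rewrite (_ : Ordinal Hi = 1); last apply/val_inj.
- by rewrite (_ : Ordinal Hi = 2); last apply/val_inj.
- by rewrite (_ : Ordinal Hi = 3); last apply/val_inj.
- by rewrite (_ : Ordinal Hi = 4); last apply/val_inj.
- by exfalso; move: Hi; rewrite !ltnS ltn0.
Qed.

Definition Mm (r vw w0 w1 u0 u1 Pr Pe p : R) : 'M[R]_5 := mx5
  [:: [:: vw; r * w0; r * w1; 0; 0];
      [:: u0 * Pr / r; vw; 0; 0; u0 * Pe / r];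
      [:: u1 * Pr / r; 0; vw; 0; u1 * Pe / r];
      [:: 0; 0; 0; vw; 0];
      [:: 0; p / r * w0; p / r * w1; 0; vw]].

Lemma lc (A B X k : R) : X = 1 -> A - B = k * (X - 1) -> A = B.
Proof. by move=> -> /eqP; rewrite subrr mulr0 subr_eq0 => /eqP. Qed.

Lemma charM (r vw w0 w1 u0 u1 Pr Pe p c : R) : r != 0 -> w0 * u0 + w1 * u1 = 1 ->
  c * c = Pr + p * Pe / (r * r) ->
  char_poly (Mm r vw w0 w1 u0 u1 Pr Pe p) = \prod_(l <- [:: vw; vw; vw; vw + c; vw - c]) ('X - l%:P).
Proof.
move=> r0 Hwu Hc.
pose X := w0 * u0 + w1 * u1.
pose S := mx5 [:: [:: 0; 0; 0; 0; r];
                  [:: 0; - w1; 0; u0; c * u0];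
                  [:: 0; w0; 0; u1; c * u1];
                  [:: 1; 0; 0; 0; 0];
                  [:: 0; 0; 1; 0; p / r]].
pose T := mx5 [:: [:: 0; 0; 0; 1; 0];
                  [:: 0; - u1; u0; 0; 0];
                  [:: - (p / (r * r)); 0; 0; 0; 1];
                  [:: - (c * X / r); w0; w1; 0; 0];
                  [:: r^-1; 0; 0; 0; 0]].
pose L := mx5 [:: [:: vw; 0; 0; 0; 0];
                  [:: 0; vw; 0; 0; 0];
                  [:: 0; 0; vw; 0; 0];
                  [:: 0; 0; Pe / r; vw - c * X; Pr + p * Pe / (r * r) - c * c * X];
                  [:: 0; 0; 0; X; vw + c * X]].
have TS : T *m S = 1%:M.
  apply/matrixP => i j; rewrite !mxE !big_ord_recl !big_ord0 !mxE /=.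
  elim/ord5_ind': i; elim/ord5_ind': j; rewrite /= ?mxE /=;
    rewrite /X; first [ (field; done) | (apply: (@lc _ _ _ 1 Hwu); field; done) ].
have uS : S \in unitmx by case: (mulmx1_unit TS).
have MS : Mm r vw w0 w1 u0 u1 Pr Pe p *m S = S *m L.
  apply/matrixP => i j; rewrite !mxE !big_ord_recl !big_ord0 !mxE /=.
  by elim/ord5_ind': i; elim/ord5_ind': j; rewrite /= /X; field.
rewrite (char_poly_sim uS MS) char_poly_trig; last first.
  apply/is_trig_mxP => i j; rewrite !mxE.
  elim/ord5_ind': i; elim/ord5_ind': j => //= _.
  by rewrite /X Hwu Hc; field.
rewrite !big_ord_recl !big_ord0 !big_cons big_nil !mxE /= /X Hwu !mulr1.
ring.
Qed.


Definition Q0 (r a b s EE Ga Gb : R) : 'M[R]_5 := mx5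
  [:: [:: 1; 0; 0; 0; 0];
      [:: a; r; 0; 0; 0];
      [:: b; 0; r; 0; 0];
      [:: s; 0; 0; r; 0];
      [:: EE; r * Ga; r * Gb; r * s; r]].

Definition FJ (r a b s EE Ga Gb Pr Pe p k1 k2 va gi0 gi1 : R) : 'M[R]_5 := mx5
  [:: [:: va; r * k1; r * k2; 0; 0];
      [:: a * va + gi0 * Pr; r * va + r * a * k1; r * a * k2; 0; gi0 * Pe];
      [:: b * va + gi1 * Pr; r * b * k1; r * va + r * b * k2; 0; gi1 * Pe];
      [:: s * va; r * s * k1; r * s * k2; r * va; 0];
      [:: (EE + Pr) * va; r * Ga * va + (r * EE + p) * k1; r * Gb * va + (r * EE + p) * k2;
          r * s * va; (r + Pe) * va]].

Lemma lc2 (A B X Y k : R) : X = Y -> A - B = k * (X - Y) -> A = B.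
Proof. by move=> -> /eqP; rewrite subrr mulr0 subr_eq0 => /eqP. Qed.

Lemma A0M_alg (sg r a b s EE Ga Gb Pr Pe p w0 w1 gi00 gi01 gi10 gi11 : R) :
  r != 0 ->
  Ga * (gi00 * w0 + gi01 * w1) + Gb * (gi10 * w0 + gi11 * w1) = a * w0 + b * w1 ->
  (sg *: Q0 r a b s EE Ga Gb) *m Mm r (a * w0 + b * w1) w0 w1 (gi00 * w0 + gi01 * w1)
      (gi10 * w0 + gi11 * w1) Pr Pe p
  = w0 *: (sg *: FJ r a b s EE Ga Gb Pr Pe p 1 0 a gi00 gi10)
    + w1 *: (sg *: FJ r a b s EE Ga Gb Pr Pe p 0 1 b gi01 gi11).
Proof.
move=> r0 Hid.
apply/matrixP => i j; rewrite !mxE !big_ord_recl !big_ord0 !mxE /=.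
elim/ord5_ind': i; elim/ord5_ind': j; rewrite /=;
  first [ (field; done) | (apply: (@lc2 _ _ _ _ (sg * Pr) Hid); field; done)
        | (apply: (@lc2 _ _ _ _ (sg * Pe) Hid); field; done) ].
Qed.


Lemma l10 : lift ord0 ord0 = 1 :> 'I_2. Proof. by apply/val_inj. Qed.
Lemma l01 : lift 1 ord0 = 0 :> 'I_2. Proof. by apply/val_inj. Qed.

Lemma ord2_ind (Pr : 'I_2 -> Prop) : Pr 0 -> Pr 1 -> forall i, Pr i.
Proof.
move=> H0 H1 [[|[|i]] Hi].
- by rewrite (_ : Ordinal Hi = 0); last apply/val_inj.
- by rewrite (_ : Ordinal Hi = 1); last apply/val_inj.
- by exfalso; move: Hi; rewrite !ltnS ltn0.
Qed.

Lemma det2 (g : 'M[R]_2) : \det g = g 0 0 * g 1 1 - g 0 1 * g 1 0.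
Proof.
rewrite (expand_det_row g 0) !big_ord_recl big_ord0 /cofactor !det_mx11 !mxE /=.
rewrite !l10 l01 /=.
by rewrite expr0 expr1 mul1r mulN1r addr0 mulrN.
Qed.

Lemma inv2 (g : 'M[R]_2) : g \in unitmx ->
  [/\ invmx g 0 0 = g 1 1 / \det g, invmx g 0 1 = - g 0 1 / \det g,
       invmx g 1 0 = - g 1 0 / \det g & invmx g 1 1 = g 0 0 / \det g].
Proof.
move=> u; rewrite /invmx u !mxE /cofactor !det_mx11 !mxE /= ?l10 ?l01.
rewrite (expr0 (-1)) (expr1 (-1)) (_ : (1 %% 2 + 1 %% 2 = 2)%N) // sqrrN expr1n.
by split; rewrite mulrC ?mul1r ?mulN1r.
Qed.



Lemma is_derive_lincomp (V1 V2 W : normedModType R) (f : V2 -> W) (L : V1 -> V2) a v :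
 (forall h : R, L (h *: v + a) = h *: L v + L a) -> derivable f (L a) (L v) ->
 is_derive a v (fun y => f (L y)) ('D_(L v) f (L a)).
Proof.
move=> HL df.
have E : (fun h : R => h^-1 *: (((fun y => f (L y)) \o shift a) (h *: v) - f (L a)))
   = (fun h => h^-1 *: ((f \o shift (L a)) (h *: L v) - f (L a))).
  by apply: funext => h /=; rewrite HL.
split; by rewrite /derivable /derive E.
Qed.

Lemma dX (x v : 'rV[R]_5) k : is_derive x v (fun y : 'rV[R]_5 => y 0 k) (v 0 k).
Proof.
have := @is_derive_lincomp _ _ _ (@id R) (fun y : 'rV[R]_5 => y 0 k) x v.
rewrite derive_id; apply.
  by move=> h; rewrite !mxE.
exact: derivable_id.
Qed.

Lemma dC (x v : 'rV[R]_5) (c : R) : is_derive x v (fun _ : 'rV[R]_5 => c) 0.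
Proof. exact: is_derive_cst. Qed.

Lemma dM (x v : 'rV[R]_5) (f g : 'rV[R]_5 -> R) df dg :
  is_derive x v f df -> is_derive x v g dg ->
  is_derive x v (fun y => f y * g y) (f x * dg + g x * df).
Proof. move=> H1 H2; exact: is_deriveM. Qed.

Lemma dD (x v : 'rV[R]_5) (f g : 'rV[R]_5 -> R) df dg :
  is_derive x v f df -> is_derive x v g dg ->
  is_derive x v (fun y => f y + g y) (df + dg).
Proof. move=> H1 H2; exact: is_deriveD. Qed.

Lemma Jac_entry n m (f : 'rV[R]_n -> 'rV[R]_m) p i j : differentiable f p ->
 Jac f p i j = 'D_(delta_mx 0 j) (fun x => f x 0 i) p.
Proof.
move=> df.
have @c : {linear 'rV[R]_m -> R}.
  by exists (fun N : 'rV[R]_m => N 0 i); do 2![eexists]; do ?[constructor];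
     rewrite ?mxE// => ? *; rewrite ?mxE//; move=> ?; rewrite !mxE.
have cc : continuous c by exact: coord_continuous.
have -> : (fun x => f x 0 i) = c \o f by [].
rewrite deriveE; last exact: differentiable_comp (linear_differentiable _ cc).
rewrite diff_comp //; last exact: linear_differentiable.
rewrite diff_lin //= -deriveE // deriveEjacobian // -rowE.
by rewrite /Jac !mxE.
Qed.

Lemma rho_eE (y : 'rV[R]_5) : rho_e y = y 0 0 *: delta_mx 0 0 + y 0 4 *: delta_mx 0 1.
Proof.
apply/rowP => j; rewrite !mxE /rhoU /eU.
by case: j => [[|[|j]] Hj] //=; rewrite ?mulr1 ?mulr0 ?addr0 ?add0r.
Qed.

Lemma rho_e_lin (v a : 'rV[R]_5) (h : R) : rho_e (h *: v + a) = h *: rho_e v + rho_e a.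
Proof. by rewrite !rho_eE !mxE !scalerDr !scalerA !scalerDl; rewrite addrACA. Qed.

Lemma dP (P : 'rV[R]_2 -> R) x v : differentiable P (rho_e x) ->
  is_derive x v (fun y => P (rho_e y))
   (v 0 0 * 'D_(delta_mx 0 0) P (rho_e x) + v 0 4 * 'D_(delta_mx 0 1) P (rho_e x)).
Proof.
move=> dPx; apply: is_derive_eq.
  apply: (@is_derive_lincomp _ _ _ P (@rho_e R)); first exact: rho_e_lin.
  exact: diff_derivable.
by rewrite !deriveE // (rho_eE v) linearD !linearZ.
Qed.

Lemma diff_row n (f : 'rV[R]_5 -> 'rV[R]_n) p :
  (forall i, differentiable (fun x => f x 0 i) p) -> differentiable f p.
Proof.
move=> H.
have -> : f = \sum_(i < n) (fun x => f x 0 i *: delta_mx 0 i).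
  by apply: funext => x; rewrite fct_sumE -row_sum_delta.
apply: differentiable_sum => i; exact: differentiableZl.
Qed.

Lemma diffMc (x : 'rV[R]_5) (f g : 'rV[R]_5 -> R) :
  differentiable f x -> differentiable g x -> differentiable (fun y => f y * g y) x.
Proof. move=> H1 H2; exact: differentiableM. Qed.

Lemma diffDc (x : 'rV[R]_5) (f g : 'rV[R]_5 -> R) :
  differentiable f x -> differentiable g x -> differentiable (fun y => f y + g y) x.
Proof. move=> H1 H2; exact: differentiableD. Qed.

Lemma diffCc (x : 'rV[R]_5) (c : R) : differentiable (fun _ : 'rV[R]_5 => c) x.
Proof. exact: differentiable_cst. Qed.

Lemma diffXc (x : 'rV[R]_5) k : differentiable (fun y : 'rV[R]_5 => y 0 k) x.
Proof. exact: differentiable_coord. Qed.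

Lemma diffPc (P : 'rV[R]_2 -> R) x : differentiable P (rho_e x) ->
  differentiable (fun y => P (rho_e y)) x.
Proof.
move=> dPx; apply: (@differentiable_comp _ _ _ _ (@rho_e R) P) => //.
have -> : @rho_e R = (fun y => y 0 0 *: delta_mx 0 0) + (fun y => y 0 4 *: delta_mx 0 1).
  by apply: funext => y; rewrite rho_eE.
by apply: differentiableD; apply: differentiableZl; apply: differentiable_coord.
Qed.

Lemma DE (V W : normedModType R) (f : V -> W) x v df : is_derive x v f df -> 'D_v f x = df.
Proof. by move=> H; rewrite derive_val. Qed.

Definition idx (a : 'I_2) : 'I_5 := if a == 0 then 1 else 2.

Lemma vU_idx (x : 'rV[R]_5) a : vU x a = x 0 (idx a).
Proof. by rewrite /vU /idx; case: (a == 0). Qed.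

Lemma EtotE (g : 'M[R]_2) x : Etot g x = x 0 4 + 2^-1 * (g 0 0 * x 0 1 * x 0 1 + g 0 1 * x 0 1 * x 0 2
   + (g 1 0 * x 0 2 * x 0 1 + g 1 1 * x 0 2 * x 0 2) + x 0 3 * x 0 3).
Proof.
rewrite /Etot !big_ord_recl !big_ord0 /vU /eU /V3U /v1U /v2U /=.
have L1 : lift ord0 ord0 = 1 :> 'I_2 by apply/val_inj.
by rewrite !addr0 expr2 L1.
Qed.


Ltac der HP := repeat first [ eapply dC | eapply dX | (eapply dP; exact HP) | eapply dM | eapply dD ].
Ltac ddiff HP := repeat first [ eapply diffCc | eapply diffXc | (eapply diffPc; exact HP) | eapply diffMc | eapply diffDc ].

Definition sq (g : 'M[R]_2) := Num.sqrt (\det g).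

Lemma QE (g : 'M[R]_2) i : (fun x => Qmap g x 0 i) = (fun x => nth 0 [:: x 0 0 * sq g; x 0 0 * sq g * x 0 1;
   x 0 0 * sq g * x 0 2; x 0 0 * sq g * x 0 3; x 0 0 * sq g * (x 0 4 + 2^-1 * (g 0 0 * x 0 1 * x 0 1 + g 0 1 * x 0 1 * x 0 2
   + (g 1 0 * x 0 2 * x 0 1 + g 1 1 * x 0 2 * x 0 2) + x 0 3 * x 0 3))] i).
Proof. by apply: funext => x; rewrite /Qmap /= mxE EtotE. Qed.

Definition dQ (g : 'M[R]_2) (U v : 'rV[R]_5) (i : 'I_5) : R :=
  let r := U 0 0 in let a := U 0 1 in let b := U 0 2 in let s := U 0 3 in
  let V k := v 0 k in
  let EEU := U 0 4 + 2^-1 * (g 0 0 * a * a + g 0 1 * a * b + (g 1 0 * b * a + g 1 1 * b * b) + s * s) in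
  let dEE := V 4 + 2^-1 * (g 0 0 * (2 * a * V 1) + g 0 1 * (V 1 * b + a * V 2)
       + (g 1 0 * (V 2 * a + b * V 1) + g 1 1 * (2 * b * V 2)) + 2 * s * V 3) in
  sq g * nth 0 [:: V 0; V 0 * a + r * V 1; V 0 * b + r * V 2; V 0 * s + r * V 3;
      V 0 * EEU + r * dEE] i.

Lemma ord5_ind (Pr : 'I_5 -> Prop) : Pr 0 -> Pr 1 -> Pr 2 -> Pr 3 -> Pr 4 -> forall i, Pr i.
Proof.
move=> H0 H1 H2 H3 H4 [[|[|[|[|[|i]]]]] Hi].
- by rewrite (_ : Ordinal Hi = 0); last apply/val_inj.
- by rewrite (_ : Ordinal Hi = 1); last apply/val_inj.
- by rewrite (_ : Ordinal Hi = 2); last apply/val_inj.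
- by rewrite (_ : Ordinal Hi = 3); last apply/val_inj.
- by rewrite (_ : Ordinal Hi = 4); last apply/val_inj.
- by exfalso; move: Hi; rewrite !ltnS ltn0.
Qed.

Lemma diffQ (g : 'M[R]_2) (U : 'rV[R]_5) : differentiable (Qmap g) U.
Proof.
apply: diff_row => i; rewrite QE.
by elim/ord5_ind: i; rewrite /=; ddiff tt.
Qed.

Lemma JQ (g : 'M[R]_2) (U : 'rV[R]_5) i j : Jac (Qmap g) U i j = dQ g U (delta_mx 0 j) i.
Proof.
rewrite Jac_entry; last exact: diffQ.
rewrite QE; elim/ord5_ind: i; rewrite /=;
 (erewrite DE; [|der tt]); rewrite /dQ /=; ring.
Qed.


Lemma FE (P : 'rV[R]_2 -> R) (g : 'M[R]_2) a i : (fun x => Fmap P g a x 0 i) =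
  (fun x => nth 0 [:: x 0 0 * sq g * x 0 (idx a);
     sq g * (x 0 0 * x 0 1 * x 0 (idx a) + invmx g 0 a * P (rho_e x));
     sq g * (x 0 0 * x 0 2 * x 0 (idx a) + invmx g 1 a * P (rho_e x));
     x 0 0 * sq g * x 0 3 * x 0 (idx a);
     sq g * (x 0 0 * (x 0 4 + 2^-1 * (g 0 0 * x 0 1 * x 0 1 + g 0 1 * x 0 1 * x 0 2
   + (g 1 0 * x 0 2 * x 0 1 + g 1 1 * x 0 2 * x 0 2) + x 0 3 * x 0 3)) + P (rho_e x)) * x 0 (idx a)] i).
Proof. by apply: funext => x; rewrite /Fmap /= mxE EtotE !vU_idx. Qed.

Definition dF (P : 'rV[R]_2 -> R) (g : 'M[R]_2) (U v : 'rV[R]_5) (al : 'I_2) (i : 'I_5) : R :=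
  let r := U 0 0 in let a := U 0 1 in let b := U 0 2 in let s := U 0 3 in
  let V k := v 0 k in
  let EEU := U 0 4 + 2^-1 * (g 0 0 * a * a + g 0 1 * a * b + (g 1 0 * b * a + g 1 1 * b * b) + s * s) in
  let dEE := V 4 + 2^-1 * (g 0 0 * (2 * a * V 1) + g 0 1 * (V 1 * b + a * V 2)
       + (g 1 0 * (V 2 * a + b * V 1) + g 1 1 * (2 * b * V 2)) + 2 * s * V 3) in
  let p := P (rho_e U) in
  let dp := V 0 * 'D_(delta_mx 0 0) P (rho_e U) + V 4 * 'D_(delta_mx 0 1) P (rho_e U) in
  let va := U 0 (idx al) in let dva := V (idx al) in
  sq g * nth 0 [:: V 0 * va + r * dva;
     V 0 * a * va + r * V 1 * va + r * a * dva + invmx g 0 al * dp;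
     V 0 * b * va + r * V 2 * va + r * b * dva + invmx g 1 al * dp;
     V 0 * s * va + r * V 3 * va + r * s * dva;
     (V 0 * EEU + r * dEE + dp) * va + (r * EEU + p) * dva] i.

Lemma diffF (P : 'rV[R]_2 -> R) (g : 'M[R]_2) (U : 'rV[R]_5) a :
  differentiable P (rho_e U) -> differentiable (Fmap P g a) U.
Proof.
move=> HP; apply: diff_row => i; rewrite FE.
by elim/ord5_ind: i; rewrite /=; ddiff HP.
Qed.

Lemma JF (P : 'rV[R]_2 -> R) (g : 'M[R]_2) (U : 'rV[R]_5) a i j :
  differentiable P (rho_e U) -> Jac (Fmap P g a) U i j = dF P g U (delta_mx 0 j) a i.
Proof.
move=> HP; rewrite Jac_entry; last exact: diffF.
rewrite FE; elim/ord5_ind: i; rewrite /=;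
 (erewrite DE; [|der HP]); rewrite /dF /=; ring.
Qed.


Lemma quad2 (g : 'M[R]_2) (x : 'rV[R]_2) :
  (x *m g *m x^T) 0 0 = x 0 0 * (x 0 0 * g 0 0 + x 0 1 * g 1 0) + x 0 1 * (x 0 0 * g 0 1 + x 0 1 * g 1 1).
Proof.
rewrite !mxE !big_ord_recl !big_ord0 !mxE !big_ord_recl !big_ord0 ?l10 /=.
ring.
Qed.

Lemma spd_facts (g : 'M[R]_2) : spd2 g -> [/\ g 1 0 = g 0 1, 0 < g 0 0 & 0 < \det g].
Proof.
case=> gT gp.
have g10 : g 1 0 = g 0 1 by rewrite -{1}gT mxE.
have g00 : 0 < g 0 0.
  have := gp (delta_mx 0 0); rewrite quad2 !mxE /=.
  have -> : (delta_mx 0 0 : 'rV[R]_2) != 0.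
    by apply/negP => /eqP/matrixP/(_ 0 0); rewrite !mxE /= => /eqP; rewrite oner_eq0.
  by move=> /(_ isT); rewrite !mul1r !mul0r !addr0.
split => //.
pose x : 'rV[R]_2 := \row_(j < 2) (if j == 0 then g 0 1 else - g 0 0).
have hx : x != 0.
  apply/negP => /eqP/matrixP/(_ 0 1); rewrite !mxE /= => /eqP.
  by rewrite oppr_eq0 gt_eqF.
have := gp x hx; rewrite quad2 !mxE /= det2 g10 => H.
have : 0 < g 0 0 * (g 0 0 * g 1 1 - g 0 1 * g 0 1).
  by move: H; congr (0 < _); ring.
by rewrite pmulr_rgt0.
Qed.

Lemma JQx (g : 'M[R]_2) (U : 'rV[R]_5) : Jac (Qmap g) U = sq g *: Q0 (U 0 0) (U 0 1) (U 0 2) (U 0 3)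
  (U 0 4 + 2^-1 * (g 0 0 * U 0 1 * U 0 1 + g 0 1 * U 0 1 * U 0 2 + (g 1 0 * U 0 2 * U 0 1 + g 1 1 * U 0 2 * U 0 2) + U 0 3 * U 0 3))
  (2^-1 * (2 * g 0 0 * U 0 1 + (g 0 1 + g 1 0) * U 0 2))
  (2^-1 * ((g 0 1 + g 1 0) * U 0 1 + 2 * g 1 1 * U 0 2)).
Proof.
apply/matrixP => i j; rewrite JQ !mxE.
by elim/ord5_ind: i; elim/ord5_ind: j; rewrite /dQ /= !mxE /=; first [ring | field].
Qed.

Lemma ord2_ind' (Pr : 'I_2 -> Prop) : Pr 0 -> Pr 1 -> forall i, Pr i.
Proof.
move=> H0 H1 [[|[|i]] Hi].
- by rewrite (_ : Ordinal Hi = 0); last apply/val_inj.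
- by rewrite (_ : Ordinal Hi = 1); last apply/val_inj.
- by exfalso; move: Hi; rewrite !ltnS ltn0.
Qed.

Lemma JFx (P : 'rV[R]_2 -> R) (g : 'M[R]_2) (U : 'rV[R]_5) al : differentiable P (rho_e U) ->
  Jac (Fmap P g al) U = sq g *: FJ (U 0 0) (U 0 1) (U 0 2) (U 0 3)
  (U 0 4 + 2^-1 * (g 0 0 * U 0 1 * U 0 1 + g 0 1 * U 0 1 * U 0 2 + (g 1 0 * U 0 2 * U 0 1 + g 1 1 * U 0 2 * U 0 2) + U 0 3 * U 0 3))
  (2^-1 * (2 * g 0 0 * U 0 1 + (g 0 1 + g 1 0) * U 0 2))
  (2^-1 * ((g 0 1 + g 1 0) * U 0 1 + 2 * g 1 1 * U 0 2))
  ('D_(delta_mx 0 0) P (rho_e U)) ('D_(delta_mx 0 1) P (rho_e U)) (P (rho_e U))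
  (if al == 0 then 1 else 0) (if al == 0 then 0 else 1) (U 0 (idx al)) (invmx g 0 al) (invmx g 1 al).
Proof.
move=> HP; apply/matrixP => i j; rewrite JF // !mxE.
by elim/ord2_ind': al; elim/ord5_ind: i; elim/ord5_ind: j; rewrite /dF /= !mxE /=; first [ring | field].
Qed.

End Main.

Unset Implicit Arguments. Set Strict Implicit.

Theorem mainTheorem4 (R : realType) (g : 'M[R]_2) (P : 'rV[R]_2 -> R)
  (U : 'rV[R]_5) :
  spd2 g ->
  (forall x : 'rV[R]_2, 0 < x 0 0 -> differentiable P x) ->
  0 < rhoU U ->
  let Prho := 'D_(delta_mx 0 0) P (rho_e U) in
  let Pe := 'D_(delta_mx 0 1) P (rho_e U) in
  let p := P (rho_e U) in
  0 < p * Pe + rhoU U ^+ 2 * Prho ->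
  let c := Num.sqrt (p * Pe + rhoU U ^+ 2 * Prho) / rhoU U in
  (forall w : 'rV[R]_2, ginv_norm2 g w = 1 ->
     let vw := vU U 0 * w 0 0 + vU U 1 * w 0 1 in
     char_poly (Abar_w P g w U) =
       \prod_(l <- [:: vw; vw; vw; vw + c; vw - c]) ('X - l%:P))
  /\ nonstrictly_hyperbolic_at P g U.
Proof.
move=> Hg HPd Hr Prho Pe p HK c.
have HP : differentiable P (rho_e U).
  by apply: HPd; rewrite /rho_e /rowl mxE.
case: (spd_facts Hg) => g10 g00 dg.
have d0 : \det g != 0 by rewrite gt_eqF.
have ug : g \in unitmx by rewrite unitmxE unitfE.
case: (inv2 ug) => gi00 gi01 gi10 gi11.
have sg0 : 0 < sq g by rewrite /sq sqrtr_gt0.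
have sg1 : sq g != 0 by rewrite gt_eqF.
have r0 : U 0 0 != 0 by rewrite gt_eqF.
have uA0 : Jac (Qmap g) U \in unitmx.
  rewrite unitmxE unitfE det_trig; last first.
    apply/is_trig_mxP => i j; rewrite JQ /dQ !mxE.
    by elim/ord5_ind: i; elim/ord5_ind: j => //= _; ring.
  rewrite !big_ord_recl big_ord0 !JQ /dQ !mxE /= ?mulr0n ?mulr1n.
  rewrite [X in X != 0](_ : _ = sq g ^+ 5 * U 0 0 ^+ 4); last ring.
  by rewrite mulf_neq0 // expf_neq0.
have H1 : forall w : 'rV[R]_2, ginv_norm2 g w = 1 ->
     let vw := vU U 0 * w 0 0 + vU U 1 * w 0 1 in
     char_poly (Abar_w P g w U) =
       \prod_(l <- [:: vw; vw; vw; vw + c; vw - c]) ('X - l%:P).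
  move=> w Hw vw.
  have dd : g 0 0 * g 1 1 - g 0 1 * g 0 1 != 0.
    by rewrite -[X in _ - _ * X]g10 -det2.
  have AM : Abar_w P g w U = Mm (U 0 0) (U 0 1 * w 0 0 + U 0 2 * w 0 1) (w 0 0) (w 0 1)
     (invmx g 0 0 * w 0 0 + invmx g 0 1 * w 0 1) (invmx g 1 0 * w 0 0 + invmx g 1 1 * w 0 1)
     Prho Pe p.
    rewrite /Abar_w /Abar !scalemxAr -mulmxDr.
    set M := Mm _ _ _ _ _ _ _ _ _.
    have A0M : Jac (Qmap g) U *m M = w 0 0 *: Jac (Fmap P g 0) U + w 0 1 *: Jac (Fmap P g 1) U.
      rewrite JQx !JFx //= g10 /M /Prho /Pe /p.
      apply: A0M_alg => //.
      by rewrite gi00 gi01 gi10 gi11 det2 g10; field.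
    by rewrite -A0M mulKmx.
  rewrite /vw /vU /v1U /v2U /=.
  rewrite AM; apply: charM => //.
  - move: Hw; rewrite /ginv_norm2 quad2 => <-.
    by rewrite gi00 gi01 gi10 gi11 g10; field.
  - have sK : Num.sqrt (p * Pe + rhoU U ^+ 2 * Prho) * Num.sqrt (p * Pe + rhoU U ^+ 2 * Prho)
       = p * Pe + rhoU U ^+ 2 * Prho by rewrite -expr2 sqr_sqrtr // ltW.
    rewrite /c; transitivity (Num.sqrt (p * Pe + rhoU U ^+ 2 * Prho) * Num.sqrt (p * Pe + rhoU U ^+ 2 * Prho)
       / (U 0 0 * U 0 0)); first by rewrite /rhoU; field.
    by rewrite sK /rhoU; field.
split; first exact H1.
move=> w Hw; exists [:: vU U 0 * w 0 0 + vU U 1 * w 0 1; vU U 0 * w 0 0 + vU U 1 * w 0 1;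
  vU U 0 * w 0 0 + vU U 1 * w 0 1; vU U 0 * w 0 0 + vU U 1 * w 0 1 + c;
  vU U 0 * w 0 0 + vU U 1 * w 0 1 - c].
split; first by [].
split; first exact (H1 w Hw).
by rewrite /= inE eqxx.
Qed.
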